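(* Under algorithm ERGO with $\kappa\le1/18$ and $\epsilon<1/12$, the fraction of bad IDs in the system is at all times less than $1/6$.
   Context: Resource model. IDs are good (follow the protocol) or bad (controlled by a single adversary). A $k$-hard challenge imposes a cost $k$ on its solver. A round is the time to solve a $1$-hard challenge plus communication with the server. In any single round in which all IDs are solving challenges, the adversary can solve at most a $\kappa$-fraction of the challenges. In any round, at most an $\epsilon$-fraction of the good IDs depart. Joins and departures occur at distinct times; every joining ID is new. ERGO (run by a server, with GoodJEst running in parallel and providing a current estimate $\tilde J$ of the good join rate): initially, the system consists of the IDs that returned a valid solution to a $1$-hard challenge (this is the end of iteration $0$). Each subsequent iteration starts at some time $\tau$ with system $S(\tau)$; during it, every joining ID must solve a challenge of hardness $1$ plus the number of IDs that joined in the last $1/\tilde J$ seconds of the current iteration (the entrance cost). When the number of joining plus departing IDs in the iteration exceeds $|S(\tau)|/11$, a purge is performed: all IDs are issued a $1$-hard challenge, the system is reset to the IDs that solve it within one round, and the next iteration begins. *)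

(* Defs.v *)
From HB Require Import structures.
From mathcomp Require Import all_boot all_order all_algebra.
Set Implicit Arguments. Unset Strict Implicit. Unset Printing Implicit Defensive.
Import Order.TTheory GRing.Theory Num.Theory.
Local Open Scope ring_scope.

(* A snapshot of the system: |S(tau)| at the start of the current iteration,
   number of join/departure events so far in the current iteration, and the
   numbers of good and bad IDs currently in the system. *)
Record ergo_state := ErgoState {
  start_size : nat;
  nevents    : nat;
  ngood      : nat;
  nbad       : nat
}.

Inductive ergo_event := JoinGood | JoinBad | DepartGood | DepartBad.

(* Effect of one join/departure event on (good, bad) counts; a departing
   ID must currently be in the system. Every joining ID is new. *)
Definition event_step (e : ergo_event) (g b g' b' : nat) : Prop :=
  match e with
  | JoinGood   => g' = g.+1 /\ b' = b
  | JoinBad    => g' = g /\ b' = b.+1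
  | DepartGood => (0 < g)%N /\ g' = g.-1 /\ b' = b
  | DepartBad  => (0 < b)%N /\ g' = g /\ b' = b.-1
  end.

(* Outcome of a round in which all g good and b bad IDs of the system are
   issued a 1-hard challenge, and the system is reset to the g' good and b'
   bad IDs that solve it within the round:
   - only IDs of the system can be retained (g' <= g, b' <= b);
   - good IDs fail only by departing, and at most an eps-fraction of the good
     IDs depart in a round: (1 - eps) g <= g';
   - in this round all (good) IDs are solving challenges, so the adversary
     solves at most a kappa-fraction of the challenges: b' <= kappa (g + b'). *)
Definition purge_ok {R : realFieldType} (kappa eps : R) (g b g' b' : nat) : Prop :=
  [/\ (g' <= g)%N, (b' <= b)%N,
      (1 - eps) * g%:R <= g'%:R
    & b'%:R <= kappa * (g%:R + b'%:R)].

(* States of the system reachable under ERGO, for an arbitrary adversary and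
   arbitrary good churn. *)
Inductive ergo_reachable {R : realFieldType} (kappa eps : R) : ergo_state -> Prop :=
  | ergo_init (G B g' b' : nat) :
      (* iteration 0: initial population of G good and B bad IDs *)
      purge_ok kappa eps G B g' b' ->
      ergo_reachable kappa eps (ErgoState (g' + b') 0 g' b')
  | ergo_step (s : ergo_state) (e : ergo_event) (g' b' : nat) :
      ergo_reachable kappa eps s ->
      event_step e (ngood s) (nbad s) g' b' ->
      (11 * (nevents s).+1 <= start_size s)%N ->
      ergo_reachable kappa eps
        (ErgoState (start_size s) (nevents s).+1 g' b')
  | ergo_purge (s : ergo_state) (e : ergo_event) (g1 b1 g' b' : nat) :
      (* a join/departure making #events exceed |S(tau)|/11 triggers a purge;
         the next iteration starts with the purged system *)
      ergo_reachable kappa eps s ->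
      event_step e (ngood s) (nbad s) g1 b1 ->
      (start_size s < 11 * (nevents s).+1)%N ->
      purge_ok kappa eps g1 b1 g' b' ->
      ergo_reachable kappa eps (ErgoState (g' + b') 0 g' b').

(* Main.v *)
Require Import Defs.
From HB Require Import structures.
From mathcomp Require Import all_boot all_order all_algebra.
From mathcomp Require Import zify ring lra.
Import Order.TTheory GRing.Theory Num.Theory.
Local Open Scope ring_scope.

Definition inv (s : ergo_state) : Prop :=
  exists b0 : nat, [/\ (199 * b0 <= 12 * start_size s)%N,
    (nbad s <= b0 + nevents s)%N,
    (start_size s <= ngood s + nbad s + nevents s)%N &
    (11 * nevents s <= start_size s)%N].

Lemma purge_inv (R : realFieldType) (kappa eps : R) g b g' b' :
  kappa <= 1 / 18 -> eps < 1 / 12 -> 0 <= kappa ->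
  purge_ok kappa eps g b g' b' -> (199 * b' <= 12 * (g' + b'))%N.
Proof.
move=> hk he hk0 [_ _ h1 h2].
have A : ((18 * b')%:R <= (g + b')%:R :> R).
  rewrite natrM natrD.
  have hg : 0 <= g%:R :> R by rewrite ler0n.
  have hb : 0 <= b'%:R :> R by rewrite ler0n.
  nra.
have B : ((11 * g)%:R <= (12 * g')%:R :> R).
  rewrite !natrM.
  have hg : 0 <= g%:R :> R by rewrite ler0n.
  nra.
rewrite ler_nat in A; rewrite ler_nat in B; lia.
Qed.

Lemma reach_inv (R : realFieldType) (kappa eps : R) :
  0 <= kappa -> kappa <= 1 / 18 -> 0 <= eps -> eps < 1 / 12 ->
  forall s, ergo_reachable kappa eps s -> inv s.
Proof.
move=> hk0 hk he0 he s; elim => {s} /=.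
- move=> G B g' b' hp; exists b'; rewrite /=; split; try lia.
  have := @purge_inv _ _ _ _ _ _ _ hk he hk0 hp; lia.
- move=> s e g' b' _ [b0 [h1 h2 h3 h4]] hev hle; exists b0; rewrite /=.
  case: e hev => /=; [move=> [-> ->]|move=> [-> ->]|move=> [h0 [-> ->]]|move=> [h0 [-> ->]]];
    split; lia.
- move=> s e g1 b1 g' b' _ _ _ _ hp; exists b'; rewrite /=; split; try lia.
  have := @purge_inv _ _ _ _ _ _ _ hk he hk0 hp; lia.
Qed.

Theorem lemma9 (R : realFieldType) (kappa eps : R) :
  0 <= kappa -> kappa <= 1 / 18 -> 0 <= eps -> eps < 1 / 12 ->
  forall s : ergo_state, ergo_reachable kappa eps s ->
  (0 < ngood s + nbad s)%N ->
  (nbad s)%:R / (ngood s + nbad s)%:R < 1 / 6 :> R.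
Proof.
move=> hk0 hk he0 he s hs hpos.
have [b0 [h1 h2 h3 h4]] := @reach_inv _ _ _ hk0 hk he0 he _ hs.
have H : (6 * nbad s < ngood s + nbad s)%N by lia.
have Hr : ((6 * nbad s)%:R < (ngood s + nbad s)%:R :> R) by rewrite ltr_nat.
have Hp : (0 < (ngood s + nbad s)%:R :> R) by rewrite ltr0n.
rewrite ltr_pdivrMr //.
rewrite natrM in Hr.
lra.
Qed.
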